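(* For filters $\Xi,\Upsilon\in P_{III*}$, one has $\mathcal C_{\Xi\text{-unc}}=\mathcal C_{\Upsilon\text{-unc}}$ if and only if all four of the following inclusions hold: $(\wedge\Xi)\cap(\vee\overline\Upsilon)\subseteq\vee\overline\Xi$, $\quad\wedge\Xi\subseteq(\vee\overline\Xi)\cup(\wedge\Upsilon)$, $(\wedge\Upsilon)\cap(\vee\overline\Xi)\subseteq\vee\overline\Upsilon$, $\quad\wedge\Upsilon\subseteq(\vee\overline\Upsilon)\cup(\wedge\Xi)$.
   Context: Let $n\ge1$, $L=\{1,\dots,n\}$, and for $i\in L$ let $\mathcal H_i$ be a Hilbert space with $1<\dim\mathcal H_i<\infty$; $\mathcal H_X=\bigotimes_{i\in X}\mathcal H_i$ and $\mathcal D_X$ is the set of density operators on $\mathcal H_X$. $P_I$ is the set of partitions of $L$ ordered by refinement ($\upsilon\preceq\xi$ iff every part of $\upsilon$ lies in a part of $\xi$). For $\xi\in P_I$, $\mathcal D_{\xi\text{-unc}}=\{\varrho\in\mathcal D_L:\varrho=\bigotimes_{X\in\xi}\varrho_X,\ \varrho_X\in\mathcal D_X\}$, and for a set $S\subseteq P_I$, $\mathcal D_{S\text{-unc}}=\bigcup_{\xi\in S}\mathcal D_{\xi\text{-unc}}$. $P_{II}$ is the set of nonempty down-sets of $P_I$, ordered by inclusion. $P_{II*}\subseteq P_{II}$ is a fixed nonempty subset, and $P_{III*}$ is the set of nonempty up-sets of $P_{II*}$. For $\Xi\in P_{III*}$: $\overline\Xi=P_{II*}\setminus\Xi$, $\wedge\Xi=\bigcap_{\boldsymbol\xi\in\Xi}\boldsymbol\xi$,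 $\vee\overline\Xi=\bigcup_{\boldsymbol\xi'\in\overline\Xi}\boldsymbol\xi'$ (equal to $\emptyset$ if $\overline\Xi=\emptyset$), and $\mathcal C_{\Xi\text{-unc}}=\bigcap_{\boldsymbol\xi'\in\overline\Xi}(\mathcal D_L\setminus\mathcal D_{\boldsymbol\xi'\text{-unc}})\cap\bigcap_{\boldsymbol\xi\in\Xi}\mathcal D_{\boldsymbol\xi\text{-unc}}$. *)

(* Defs.v *)
From HB Require Import structures.
From mathcomp Require Import all_boot all_order all_algebra.
Set Implicit Arguments. Unset Strict Implicit. Unset Printing Implicit Defensive.
Import Order.TTheory GRing.Theory Num.Theory.
Local Open Scope ring_scope.

(* Sites L = 'I_n; site i carries the Hilbert space C^(d i) (a chosen
   orthonormal basis indexed by 'I_(d i)). *)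

(* Basis index of H_X = (x)_{i in X} H_i : configurations on X. *)
Definition cfg (n : nat) (d : 'I_n -> nat) (X : {set 'I_n}) : finType :=
  {dffun forall i : {i : 'I_n | i \in X}, 'I_(d (val i))}.

(* Basis index of H_L. *)
Definition cfgL (n : nat) (d : 'I_n -> nat) : finType :=
  {dffun forall i : 'I_n, 'I_(d i)}.

Definition res (n : nat) (d : 'I_n -> nat) (X : {set 'I_n}) (a : cfgL d) : cfg d X :=
  [ffun i : {i : 'I_n | i \in X} => a (val i)].

(* Density operator on C^I, given by its matrix in the basis indexed by I:
   self-adjoint, positive semidefinite, trace one. *)
Definition is_density (C : numClosedFieldType) (I : finType) (r : I -> I -> C) : Prop :=
  (forall a b, r b a = (r a b)^*) /\
  (forall v : I -> C, 0 <= \sum_a \sum_b (v a)^* * r a b * v b) /\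
  \sum_a r a a = 1.

(* rho is xi-uncorrelated: rho = (x)_{X in xi} rho_X with rho_X in D_X *)
Definition unc (C : numClosedFieldType) (n : nat) (d : 'I_n -> nat)
  (xi : {set {set 'I_n}}) (rho : cfgL d -> cfgL d -> C) : Prop :=
  is_density rho /\
  exists f : forall X : {set 'I_n}, cfg d X -> cfg d X -> C,
    (forall X, X \in xi -> is_density (f X)) /\
    forall a b, rho a b = \prod_(X in xi) f X (res X a) (res X b).

Definition uncS (C : numClosedFieldType) (n : nat) (d : 'I_n -> nat)
  (S : {set {set {set 'I_n}}}) (rho : cfgL d -> cfgL d -> C) : Prop :=
  exists2 xi, xi \in S & unc xi rho.

Definition is_partition (n : nat) (P : {set {set 'I_n}}) : bool :=
  partition P [set: 'I_n].

Definition refines (n : nat) (ups xi : {set {set 'I_n}}) : bool :=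
  [forall X in ups, [exists Y in xi, X \subset Y]].

Definition is_downset (n : nat) (S : {set {set {set 'I_n}}}) : bool :=
  [&& [forall x in S, is_partition x], S != set0 &
      [forall x in S, forall y, (is_partition y && refines y x) ==> (y \in S)]].

Definition is_PIIstar (n : nat) (Q : {set {set {set {set 'I_n}}}}) : bool :=
  (Q != set0) && [forall S in Q, is_downset S].

Definition is_filter (n : nat) (Q Xi : {set {set {set {set 'I_n}}}}) : bool :=
  [&& Xi \subset Q, Xi != set0 &
      [forall x in Xi, forall y in Q, (x \subset y) ==> (y \in Xi)]].

Definition wedgeF (n : nat) (Xi : {set {set {set {set 'I_n}}}}) : {set {set {set 'I_n}}} :=
  \bigcap_(S in Xi) S.

(* vee of the complement of Xi in Q (empty if the complement is empty) *)
Definition veeCompl (n : nat) (Q Xi : {set {set {set {set 'I_n}}}}) : {set {set {set 'I_n}}} :=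
  \bigcup_(S in Q :\: Xi) S.

Definition Cunc (C : numClosedFieldType) (n : nat) (d : 'I_n -> nat)
  (Q Xi : {set {set {set {set 'I_n}}}}) (rho : cfgL d -> cfgL d -> C) : Prop :=
  is_density rho /\
  (forall S, S \in Q :\: Xi -> ~ uncS S rho) /\
  (forall S, S \in Xi -> uncS S rho).

(* Main.v *)
Require Import Defs.
From HB Require Import structures.
From mathcomp Require Import all_boot all_order all_algebra.
From mathcomp Require Import ring.
Import Order.TTheory GRing.Theory Num.Theory.
Set Implicit Arguments. Unset Strict Implicit. Unset Printing Implicit Defensive.

Section Dev.
Variable C : numClosedFieldType.
Variables (n : nat) (d : 'I_n -> nat).
Hypothesis hd : forall i, (1 < d i)%N.
Local Open Scope ring_scope.

Notation gcfg := (cfgL d).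

Definition z0 : gcfg := finfun (fun i => Ordinal (ltnW (hd i))).
Definition o1 : gcfg := finfun (fun i => Ordinal (hd i)).
Definition mix (S : {set 'I_n}) (a b : gcfg) : gcfg :=
  finfun (fun i => if i \in S then a i else b i).
Definition Ez (S : {set 'I_n}) (c a : gcfg) : bool :=
  [forall i, (i \notin S) ==> (a i == c i)].
Definition E (S : {set 'I_n}) := Ez S z0.

Lemma mixE (S : {set 'I_n}) (a b : gcfg) i : mix S a b i = if i \in S then a i else b i.
Proof. by rewrite ffunE. Qed.

Ltac agr Y := let i := fresh "i" in let H := fresh "H" in
  move=> i H; rewrite ?mixE; move: H; rewrite ?inE; case: (i \in Y) => //=.

Lemma EzP (S : {set 'I_n}) (c a : gcfg) : reflect (forall i, i \notin S -> a i = c i) (Ez S c a).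
Proof.
apply: (iffP forallP) => H i.
  by move=> Hi; move: (H i); rewrite Hi => /eqP.
by apply/implyP => Hi; rewrite (H i Hi).
Qed.

Lemma E_setT (a : gcfg) : E setT a.
Proof. by apply/EzP => i; rewrite inE. Qed.

Lemma SS (A B : {set 'I_n}) (F : gcfg -> C) : A :&: B = set0 ->
  \sum_(c | E (A :|: B) c) F c = \sum_(a | E A a) \sum_(b | E B b) F (mix A a b).
Proof.
move=> AB.
have disj i : i \in A -> i \in B -> False.
  by move=> HA HB; move: (in_set0 i); rewrite -AB inE HA HB.
rewrite (partition_big (fun c => mix A c z0) (E A)); last first.
  by move=> c _; apply/EzP => i Hi; rewrite mixE (negbTE Hi).
apply: eq_bigr => a Ea.
rewrite (reindex_onto (fun b => mix A a b) (fun c => mix B c z0)); last first.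
  move=> c /andP[/EzP Ec /eqP Hc]; apply/ffunP => i; rewrite !mixE.
  case: ifP => HA; first by rewrite -Hc mixE HA.
  case: ifP => HB //; rewrite Ec // inE HA HB //.
apply: eq_bigl => b; apply/idP/idP.
  by move=> /andP[_ /eqP <-]; apply/EzP => i Hi; rewrite mixE (negbTE Hi).
move/EzP: Ea => Ea /EzP Eb.
apply/andP; split; first (apply/andP; split).
- apply/EzP => i; rewrite inE negb_or => /andP[HA HB]; rewrite mixE (negbTE HA) Eb //.
- apply/eqP; apply/ffunP => i; rewrite !mixE.
  case HA: (i \in A) => //; rewrite Ea ?HA //.
- apply/eqP; apply/ffunP => i; rewrite !mixE.
  case HB: (i \in B); case HA: (i \in A) => //; try by case: (disj i HA HB).
  all: by rewrite Eb ?HB.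
Qed.

Definition bdec (b : bool) : {b} + {~~ b} :=
  if b as b return {b} + {~~ b} then left isT else right isT.
Definition extf (X : {set 'I_n}) (al : cfg d X) (i : 'I_n) : 'I_(d i) :=
  match bdec (i \in X) with
  | left H => al (exist _ i H)
  | right _ => z0 i
  end.
Definition ext (X : {set 'I_n}) (al : cfg d X) : gcfg := finfun (extf al).

Lemma extE_in (X : {set 'I_n}) (al : cfg d X) i (H : i \in X) :
  ext al i = al (exist _ i H).
Proof.
rewrite ffunE /extf; case: (bdec (i \in X)) => [H'|H'].
  by rewrite (bool_irrelevance H' H).
by move: H'; rewrite H.
Qed.

Lemma extE_out (X : {set 'I_n}) (al : cfg d X) i : i \notin X -> ext al i = z0 i.
Proof.
move=> H; rewrite ffunE /extf; case: (bdec (i \in X)) => // H'.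
by move: H; rewrite H'.
Qed.

Lemma res_ext (X : {set 'I_n}) (al : cfg d X) : res X (ext al) = al.
Proof.
apply/ffunP => -[i Hi]; rewrite ffunE /= (extE_in al Hi).
by [].

Qed.

Lemma res_agree (X : {set 'I_n}) (a b : gcfg) :
  (forall i, i \in X -> a i = b i) -> res X a = res X b.
Proof. by move=> H; apply/ffunP => -[i Hi]; rewrite !ffunE /= H. Qed.

Lemma ext_res_in (X : {set 'I_n}) (a : gcfg) i : i \in X -> ext (res X a) i = a i.
Proof. by move=> Hi; rewrite (extE_in _ Hi) ffunE. Qed.

Lemma Rp (X : {set 'I_n}) (c : gcfg) (g : gcfg -> C) :
  \sum_(a | Ez X c a) g a = \sum_(al : cfg d X) g (mix X (ext al) c).
Proof.
rewrite (reindex_onto (fun al => mix X (ext al) c) (res X)); last first.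
  move=> a /EzP Ha; apply/ffunP => i; rewrite mixE.
  case: ifP => Hi; first by rewrite ext_res_in.
  by rewrite Ha ?Hi.
apply: eq_bigl => al; apply/andP; split.
  by apply/EzP => i Hi; rewrite mixE (negbTE Hi).
apply/eqP; rewrite -[RHS]res_ext; apply: res_agree => i Hi.
by rewrite mixE Hi.
Qed.

Lemma mix_ext_z0 (X : {set 'I_n}) (al : cfg d X) : mix X (ext al) z0 = ext al.
Proof.
apply/ffunP => i; rewrite mixE; case: ifP => // Hi.
by rewrite extE_out ?Hi.
Qed.

Lemma R0 (X : {set 'I_n}) (g : cfg d X -> C) :
  \sum_(a | E X a) g (res X a) = \sum_(al : cfg d X) g al.
Proof.
rewrite /E Rp; apply: eq_bigr => al _; by rewrite mix_ext_z0 res_ext.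
Qed.

Definition agree (S : {set 'I_n}) (a b : gcfg) := forall i, i \in S -> a i = b i.

Section Rho.
Variable rho : gcfg -> gcfg -> C.

Definition tr := \sum_c rho c c.
Definition PT (S : {set 'I_n}) (a b : gcfg) :=
  \sum_(c | E (~: S) c) rho (mix S a c) (mix S b c).

Lemma mix_agree S a a' c : agree S a a' -> mix S a c = mix S a' c.
Proof. by move=> H; apply/ffunP => i; rewrite !mixE; case: ifP => // /H. Qed.

Lemma PT_dep S a a' b b' : agree S a a' -> agree S b b' -> PT S a b = PT S a' b'.
Proof.
by move=> Ha Hb; apply: eq_bigr => c _; rewrite (mix_agree _ Ha) (mix_agree _ Hb).
Qed.

Lemma PT_setT a b : PT setT a b = rho a b.
Proof.
rewrite /PT (big_pred1 z0); last first.
  move=> c; rewrite /= /E; apply/EzP/eqP => [H|->//]; apply/ffunP => i.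
  by apply: H; rewrite !inE.
by congr rho; apply/ffunP => i; rewrite mixE inE.
Qed.

Lemma PT_set0 a b : PT set0 a b = tr.
Proof.
rewrite /PT /tr setC0; apply: eq_big => [c|c _]; first exact: E_setT.
by congr rho; apply/ffunP => i; rewrite mixE inE.
Qed.

Lemma PTH (S A : {set 'I_n}) a b :
  \sum_(c1 | E (S :\: A) c1) PT S (mix A a c1) (mix A b c1) = PT (A :&: S) a b.
Proof.
rewrite /PT.
have -> : ~: (A :&: S) = (S :\: A) :|: ~: S.
  by apply/setP => i; rewrite !inE; case: (i \in A); case: (i \in S).
rewrite SS; last by apply/setP => i; rewrite !inE; case: (i \in A); case: (i \in S).
apply: eq_bigr => c1 _; apply: eq_bigr => e _.
by congr rho; apply/ffunP => i; rewrite !mixE !inE;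
  case: (i \in A); case: (i \in S).
Qed.

Definition Split (S : {set 'I_n}) := forall a b, rho a b = PT S a b * PT (~: S) a b.

Lemma Msplit S A a b : Split S -> PT A a b = PT (A :&: S) a b * PT (A :\: S) a b.
Proof.
move=> HS.
rewrite setDE -(PTH S A a b) -(PTH (~: S) A a b) big_distrlr /=.
rewrite {1}/PT (eq_bigr (fun c => PT S (mix A a c) (mix A b c) * PT (~: S) (mix A a c) (mix A b c))); last by move=> c _; exact: HS.
have -> : ~: A = (S :\: A) :|: (~: S :\: A).
  by apply/setP => i; rewrite !inE; case: (i \in A); case: (i \in S).
rewrite SS; last by apply/setP => i; rewrite !inE; case: (i \in A); case: (i \in S).
apply: eq_bigr => c1 _; apply: eq_bigr => c2 _.
congr (_ * _); apply: PT_dep => i; rewrite !mixE !inE.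
- by case: (i \in A) => //= ->.
- by case: (i \in A) => //= ->.
- by case: (i \in A) => //= /negbTE ->.
- by case: (i \in A) => //= /negbTE ->.
Qed.

Hypothesis tr1 : tr = 1.

Lemma Split0 : Split set0.
Proof. by move=> a b; rewrite PT_set0 tr1 mul1r setC0 PT_setT. Qed.

Lemma SplitC S : Split S -> Split (~: S).
Proof. by move=> H a b; rewrite setCK mulrC H. Qed.

Lemma SplitI S T : Split S -> Split T -> Split (S :&: T).
Proof.
move=> HS HT a b.
rewrite HT (Msplit _ _ _ HS) [PT (~: T) a b](Msplit _ _ _ HS).
rewrite [PT (~: (S :&: T)) a b](Msplit _ _ _ HS).
have -> : ~: (S :&: T) :\: S = ~: S by apply/setP => i; rewrite !inE; case: (i \in S); case: (i \in T).
rewrite [PT (~: S) a b](Msplit _ _ _ HT).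
have -> : ~: (S :&: T) :&: S = S :\: T by apply/setP => i; rewrite !inE; case: (i \in S); case: (i \in T).
have -> : ~: T :&: S = S :\: T by apply/setP => i; rewrite !inE; case: (i \in S); case: (i \in T).
have -> : T :\: S = ~: S :&: T by apply/setP => i; rewrite !inE; case: (i \in S); case: (i \in T).
have -> : ~: T :\: S = ~: S :\: T by apply/setP => i; rewrite !inE; case: (i \in S); case: (i \in T).
rewrite setIC.
by rewrite -!mulrA; congr (_ * _); rewrite mulrCA.
Qed.

Lemma PT_union S T a b : Split S -> S :&: T = set0 ->
  PT (S :|: T) a b = PT S a b * PT T a b.
Proof.
move=> HS ST; rewrite (Msplit _ _ _ HS).
have -> : (S :|: T) :&: S = S by rewrite setUK.
have -> // : (S :|: T) :\: S = T.
apply/setP => i; rewrite !inE; case HS': (i \in S) => //=.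
case HT: (i \in T) => //; move: (in_set0 i); rewrite -ST inE HS' HT //.
Qed.

Lemma PT_bigcup (r : seq {set 'I_n}) a b :
  uniq r -> {in r &, forall X Y, X != Y -> X :&: Y = set0} -> {in r, forall X, Split X} ->
  PT (\bigcup_(X <- r) X) a b = \prod_(X <- r) PT X a b.
Proof.
elim: r => [|X r IH] /=.
  by move=> _ _ _; rewrite !big_nil PT_set0 tr1.
move=> /andP[Xr ur] Hd Hs.
rewrite !big_cons PT_union.
- rewrite IH //; first by move=> Y Z HY HZ; apply: Hd; rewrite inE ?HY ?HZ orbT.
  by move=> Y HY; apply: Hs; rewrite inE HY orbT.
- by apply: Hs; rewrite inE eqxx.
apply/setP => i; rewrite !inE; apply/negbTE; apply/andP => -[HX].
rewrite bigcup_seq => /bigcupP -[Y HY HiY].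
have XY : X != Y by apply: contraNneq Xr => ->.
move: (in_set0 i); rewrite -(Hd X Y) ?inE ?eqxx ?HY ?orbT // HX HiY //.
Qed.

Lemma BP (Y : {set 'I_n}) (F G : gcfg -> gcfg -> C) :
  (forall a b, rho a b = F a b * G a b) ->
  (forall a a' b b', agree Y a a' -> agree Y b b' -> F a b = F a' b') ->
  (forall a a' b b', agree (~: Y) a a' -> agree (~: Y) b b' -> G a b = G a' b') ->
  \sum_(c | E Y c) F c c = 1 -> Split Y.
Proof.
move=> HFG HF HG tF.
set tG := \sum_(c | E (~: Y) c) G c c.
have PTY a b : PT Y a b = F a b * tG.
  rewrite /PT mulr_sumr; apply: eq_bigr => c _; rewrite HFG.
  by congr (_ * _); [apply: HF | apply: HG]; agr Y.
have PTYc a b : PT (~: Y) a b = G a b.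
  rewrite /PT setCK -[G a b]mul1r -tF mulr_suml; apply: eq_bigr => c _; rewrite HFG.
  by congr (_ * _); [apply: HF | apply: HG]; agr Y.
have htG : tG = 1.
  rewrite -tr1 /tr (eq_bigl (fun c => E (Y :|: ~: Y) c)); last first.
    by move=> c; rewrite setUCr E_setT.
  rewrite SS ?setICr // -[tG]mul1r -tF mulr_suml; apply: eq_bigr => c1 _.
  rewrite mulr_sumr; apply: eq_bigr => c2 _; rewrite HFG.
  by congr (_ * _); [apply: HF | apply: HG]; agr Y.
by move=> a b; rewrite PTY PTYc htG mulr1 HFG.
Qed.
End Rho.

Lemma res_mix_ext (X : {set 'I_n}) (al : cfg d X) c : res X (mix X (ext al) c) = al.
Proof.
rewrite -[RHS]res_ext; apply: res_agree => i Hi.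
by rewrite mixE Hi.
Qed.

Lemma unc_of_fac (rho : gcfg -> gcfg -> C) (xi : {set {set 'I_n}}) :
  is_density rho -> (forall a b, rho a b = \prod_(X in xi) PT rho X a b) -> unc xi rho.
Proof.
move=> Hd Hf; split => //.
have [Hh [Hp Ht]] := Hd.
exists (fun X (al be : cfg d X) => PT rho X (ext al) (ext be)); split; last first.
  move=> a b; rewrite Hf; apply: eq_bigr => X _; apply: PT_dep => i Hi;
  by rewrite ext_res_in.
move=> X _; split; [|split].
- move=> al be; rewrite /PT rmorph_sum; apply: eq_bigr => c _; exact: Hh.
- move=> v.
  have -> : \sum_(al : cfg d X) \sum_(be : cfg d X) (v al)^* * PT rho X (ext al) (ext be) * v be
     = \sum_(c | E (~: X) c) \sum_(al : cfg d X) \sum_(be : cfg d X)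
         (v al)^* * rho (mix X (ext al) c) (mix X (ext be) c) * v be.
    rewrite [RHS]exchange_big; apply: eq_bigr => al _.
    rewrite [RHS]exchange_big; apply: eq_bigr => be _.
    by rewrite /PT mulr_sumr mulr_suml.
  apply: sumr_ge0 => c _.
  pose u (a : gcfg) := if Ez X c a then v (res X a) else 0.
  have := Hp u.
  have -> : \sum_a \sum_b (u a)^* * rho a b * u b =
            \sum_(a | Ez X c a) \sum_(b | Ez X c b) (v (res X a))^* * rho a b * v (res X b).
    rewrite [RHS]big_mkcond; apply: eq_bigr => a _; rewrite /u.
    case: ifP => _; last by rewrite big1 // => b _; rewrite rmorph0 !mul0r.
    rewrite [RHS]big_mkcond; apply: eq_bigr => b _.
    by case: ifP => _ //; rewrite mulr0.
  rewrite Rp; under eq_bigr => al _ do rewrite Rp.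
  by under eq_bigr => al _ do under eq_bigr => be _ do rewrite !res_mix_ext.
- have -> : \sum_(al : cfg d X) PT rho X (ext al) (ext al) = \sum_(a | E X a) PT rho X a a.
    rewrite -(R0 (fun al => PT rho X (ext al) (ext al))); apply: eq_bigr => a Ea.
    by apply: PT_dep => i Hi; rewrite ext_res_in.
  rewrite /PT -(SS (fun c => rho c c)) ?setICr //.
  by rewrite -Ht; apply: eq_bigl => c; rewrite setUCr E_setT.
Qed.

Lemma part_disj (P : {set {set 'I_n}}) X Y i : is_partition P -> X \in P -> Y \in P ->
  X != Y -> i \in X -> i \in Y -> False.
Proof.
move=> /and3P[_ /trivIsetP Ht _] HX HY XY HiX HiY.
move: (in_set0 i); rewrite -(disjoint_setI0 (Ht _ _ HX HY XY)) inE HiX HiY //.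
Qed.

Lemma part_cover (P : {set {set 'I_n}}) i : is_partition P -> exists2 X, X \in P & i \in X.
Proof.
move=> /and3P[/eqP Hc _ _]; have : i \in cover P by rewrite Hc inE.
by move/bigcupP.
Qed.

Lemma split_of_unc (rho : gcfg -> gcfg -> C) (eta : {set {set 'I_n}}) Y :
  is_partition eta -> unc eta rho -> Y \in eta -> Split rho Y.
Proof.
move=> Hp [[Hh [Hps Ht]] [f [Hf Hr]]] HY.
apply: (@BP rho Ht Y (fun a b => f Y (res Y a) (res Y b))
   (fun a b => \prod_(X in eta | X != Y) f X (res X a) (res X b))).
- by move=> a b; rewrite Hr (bigD1 Y).
- by move=> a a' b b' Ha Hb; rewrite (res_agree Ha) (res_agree Hb).
- move=> a a' b b' Ha Hb; apply: eq_bigr => X /andP[HX XY].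
  have HXY i : i \in X -> i \in ~: Y.
    move=> Hi; rewrite inE; apply/negP => HiY; exact: (part_disj Hp HX HY XY Hi HiY).
  by rewrite (res_agree (fun i Hi => Ha i (HXY i Hi))) (res_agree (fun i Hi => Hb i (HXY i Hi))).
- by rewrite (R0 (fun al => f Y al al)); case: (Hf Y HY) => _ [].
Qed.

Lemma min_exists (rho : gcfg -> gcfg -> C) : is_density rho ->
  exists xi, [/\ is_partition xi, unc xi rho &
    forall eta, is_partition eta -> unc eta rho -> refines xi eta].
Proof.
move=> Hd; have Ht : tr rho = 1 by case: Hd => _ [].
pose Spb (S : {set 'I_n}) := [forall a, forall b, rho a b == PT rho S a b * PT rho (~: S) a b].
have SpP S : reflect (Split rho S) (Spb S).
  apply: (iffP forallP) => H.
    by move=> a b; apply/eqP; move/forallP: (H a) => /(_ b).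
  by move=> a; apply/forallP => b; apply/eqP; apply: H.
pose B i := \bigcap_(S | Spb S && (i \in S)) S.
have Bsplit i : Split rho (B i).
  apply: (big_ind (fun S => Split rho S)).
  - by rewrite -setC0; apply: SplitC; apply: Split0.
  - by move=> S T; apply: SplitI.
  - by move=> S /andP[/SpP].
have Bin i : i \in B i by apply/bigcapP => S /andP[].
have Bsub i S : Split rho S -> i \in S -> B i \subset S.
  by move=> HS Hi; apply: (bigcap_inf S); rewrite Hi andbT; apply/SpP.
have Beq i j : j \in B i -> B i = B j.
  move=> Hj.
  have s1 : B j \subset B i by apply: Bsub.
  have Hi : i \in B j.
    apply/negPn/negP => Hi.
    have HD : Split rho (B i :&: ~: B j) by apply: SplitI => //; apply: SplitC.
    have : B i \subset B i :&: ~: B j by apply: Bsub => //; rewrite !inE Bin.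
    by move/subsetP/(_ j Hj); rewrite !inE Bin andbF.
  by apply/eqP; rewrite eqEsubset s1 andbT; apply: Bsub.
pose R := [rel i j | j \in B i].
have eqR : {in [set: 'I_n] & &, equivalence_rel R}.
  move=> x y w _ _ _; split; first exact: Bin.
  by move=> /= Hxy; rewrite (Beq _ _ Hxy).
pose xi := equivalence_partition R [set: 'I_n].
have Hxi : is_partition xi by apply: equivalence_partitionP.
have blk X : X \in xi -> exists x, X = B x.
  move/imsetP => [x _ ->]; exists x; apply/setP => y; by rewrite !inE.
exists xi; split => //.
- apply: unc_of_fac => // a b.
  rewrite -PT_setT.
  move: (Hxi) => /and3P[/eqP Hc /trivIsetP Htr _].
  rewrite -Hc /cover -big_enum -big_enum /= PT_bigcup //.
  + exact: enum_uniq.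
  + by move=> X Y; rewrite !mem_enum => HX HY XY; apply: disjoint_setI0; apply: Htr.
  + by move=> X; rewrite mem_enum => /blk [x ->].
- move=> eta Heta Hu; apply/forallP => X; apply/implyP => HX.
  have [x HXx] := blk X HX.
  have [Y HY HxY] := part_cover x Heta.
  apply/existsP; exists Y; rewrite HY HXx /=.
  by apply: Bsub => //; apply: (split_of_unc Heta Hu).
Qed.

Lemma E_set0 c : E set0 c = (c == z0).
Proof.
apply/EzP/eqP => [H|Hc i _]; last by rewrite Hc.
apply/ffunP => i; apply: H; by rewrite inE.
Qed.

Lemma prod_trace (r : seq {set 'I_n}) (g : {set 'I_n} -> gcfg -> C) :
  uniq r -> {in r &, forall X Y, X != Y -> X :&: Y = set0} ->
  (forall X a b, agree X a b -> g X a = g X b) ->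
  {in r, forall X, \sum_(c | E X c) g X c = 1} ->
  \sum_(c | E (\bigcup_(X <- r) X) c) \prod_(X <- r) g X c = 1.
Proof.
move=> + + Hg; elim: r => [|X r IH] /=.
  move=> _ _ _; rewrite big_nil (big_pred1 z0) ?big_nil // => c; exact: E_set0.
move=> /andP[Xr ur] Hd Hs.
have XU : X :&: \bigcup_(Y <- r) Y = set0.
  apply/setP => i; rewrite !inE; apply/negbTE; apply/andP => -[HX].
  rewrite bigcup_seq => /bigcupP -[Y HY HiY].
  have XY : X != Y by apply: contraNneq Xr => ->.
  move: (in_set0 i); rewrite -(Hd X Y) ?inE ?eqxx ?HY ?orbT // HX HiY //.
rewrite big_cons SS //.
transitivity ((\sum_(c | E X c) g X c) *
   \sum_(c | E (\bigcup_(Y <- r) Y) c) \prod_(Y <- r) g Y c); last first.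
  rewrite (Hs X) ?inE ?eqxx // IH ?mul1r //.
  - by move=> Y Z HY HZ; apply: Hd; rewrite inE ?HY ?HZ orbT.
  - by move=> Y HY; apply: Hs; rewrite inE HY orbT.
rewrite mulr_suml; apply: eq_bigr => c1 _; rewrite mulr_sumr; apply: eq_bigr => c2 _.
rewrite big_cons; congr (_ * _).
  by apply: Hg => i Hi; rewrite mixE Hi.
rewrite big_seq_cond [RHS]big_seq_cond; apply: eq_bigr => Y /andP[HY _].
apply: Hg => i Hi; rewrite mixE.
case: ifP => // HiX.
have XY : X != Y by apply: contraNneq Xr => ->.
move: (in_set0 i); rewrite -(Hd X Y) ?inE ?eqxx ?HY ?orbT // HiX Hi //.
Qed.

Definition wl (X : {set 'I_n}) (al : cfg d X) : bool := (al == res X z0) || (al == res X o1).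
Definition fx (X : {set 'I_n}) (al be : cfg d X) : C := (wl al)%:R * (wl be)%:R / 2%:R.

Lemma z0o1_neq (X : {set 'I_n}) : X != set0 -> res X z0 != res X o1.
Proof.
move=> /set0Pn [i Hi]; apply/eqP => /ffunP /(_ (exist _ i Hi)).
by rewrite !ffunE /= => /(congr1 val).
Qed.

Lemma natb2 (b : bool) : (b%:R * b%:R : C) = b%:R.
Proof. by case: b; rewrite ?mulr1 ?mulr0. Qed.

Lemma conj_natb (b : bool) : ((b%:R : C)^* = b%:R).
Proof. exact: conjC_nat. Qed.

Lemma fx_density (X : {set 'I_n}) : X != set0 -> is_density (@fx X).
Proof.
move=> X0; split; [|split].
- move=> al be; rewrite /fx fmorph_div !rmorphM /= !conjC_nat; ring.
- move=> v.
  set s := \sum_be (wl be)%:R * v be.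
  have -> : \sum_al \sum_be (v al)^* * fx al be * v be = s^* * s / 2%:R.
    rewrite /s rmorph_sum big_distrlr /= mulr_suml; apply: eq_bigr => al _.
    rewrite mulr_suml; apply: eq_bigr => be _.
    rewrite rmorphM /= conjC_nat /fx; ring.
  apply: mulr_ge0; last by rewrite invr_ge0 ler0n.
  by rewrite mulrC mul_conjC_ge0.
- rewrite /fx; under eq_bigr => al _ do rewrite natb2.
  rewrite -mulr_suml.
  have -> : \sum_(al : cfg d X) (@wl X al)%:R = \sum_(al | @wl X al) (1 : C).
    by rewrite [RHS]big_mkcond; apply: eq_bigr => al _; case: (wl al).
  rewrite sumr_const.
  have -> : #|[pred al : cfg d X | @wl X al]| = 2%N.
    by rewrite (eq_card (B := pred2 (res X z0) (res X o1))) // card2 z0o1_neq.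
  by rewrite mulfV // pnatr_eq0.
Qed.

Definition rhoX (xi : {set {set 'I_n}}) (a b : gcfg) : C :=
  \prod_(X in xi) fx (res X a) (res X b).

Lemma part_ne0 (xi : {set {set 'I_n}}) X : is_partition xi -> X \in xi -> X != set0.
Proof. by move=> /and3P[_ _ H0] HX; apply: contraNneq H0 => <-. Qed.

Lemma rhoX_density xi : is_partition xi -> is_density (rhoX xi).
Proof.
move=> Hxi; split; [|split].
- move=> a b; rewrite /rhoX rmorph_prod; apply: eq_bigr => X _.
  by rewrite /fx fmorph_div !rmorphM /= !conjC_nat [X in X / _]mulrC.
- move=> v.
  pose W a := \prod_(X in xi) ((wl (res X a))%:R : C).
  pose K := \prod_(X in xi) ((2%:R : C)^-1).
  have eqr a b : rhoX xi a b = W a * W b * K by rewrite /rhoX -!big_split.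
  have Wr a : (W a)^* = W a.
    by rewrite rmorph_prod; apply: eq_bigr => X _; exact: conjC_nat.
  set s := \sum_b W b * v b.
  have -> : \sum_a \sum_b (v a)^* * rhoX xi a b * v b = K * (s^* * s).
    rewrite /s rmorph_sum big_distrlr /= mulr_sumr; apply: eq_bigr => a _.
    rewrite mulr_sumr; apply: eq_bigr => b _.
    rewrite eqr rmorphM /= Wr; ring.
  apply: mulr_ge0; first by apply: prodr_ge0 => X _; rewrite invr_ge0 ler0n.
  by rewrite mulrC mul_conjC_ge0.
- move: (Hxi) => /and3P[/eqP Hc /trivIsetP Htr _].
  rewrite -(@prod_trace (enum xi) (fun X c => fx (res X c) (res X c))).
  + apply: eq_big => [c|c _].
      rewrite bigcup_seq (eq_bigl (fun X => X \in xi)); last by move=> X; rewrite mem_enum.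
      by rewrite -/(cover xi) Hc E_setT.
    by rewrite /rhoX big_enum.
  + exact: enum_uniq.
  + by move=> X Y; rewrite !mem_enum => HX HY XY; apply: disjoint_setI0; apply: Htr.
  + by move=> X a b Hab; rewrite (res_agree Hab).
  + move=> X; rewrite mem_enum => HX.
    rewrite (R0 (fun al => fx al al)).
    by case: (fx_density (part_ne0 Hxi HX)) => _ [].
Qed.

Lemma rhoX_unc xi : is_partition xi -> unc xi (rhoX xi).
Proof.
move=> Hxi; split; first exact: rhoX_density.
exists (@fx); split => // X HX; exact: fx_density (part_ne0 Hxi HX).
Qed.

Lemma fx_ne0 (X : {set 'I_n}) (al be : cfg d X) : wl al -> wl be -> fx al be != 0.
Proof. by move=> Ha Hb; rewrite /fx Ha Hb /= mulr1 mul1r invr_eq0 pnatr_eq0. Qed.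

Lemma fx_zero (X : {set 'I_n}) (al be : cfg d X) : ~~ wl al -> fx al be = 0.
Proof. by move=> Ha; rewrite /fx (negbTE Ha) mulr0n !mul0r. Qed.

Lemma rhoX_min xi eta : is_partition xi -> is_partition eta ->
  unc eta (rhoX xi) -> refines xi eta.
Proof.
move=> Hxi Heta [_ [g [_ Hg]]].
apply/forallP => X; apply/implyP => HX.
case: (boolP [exists Y in eta, X \subset Y]) => // Hno; exfalso.
have /set0Pn [i0 Hi0] := part_ne0 Hxi HX.
have [Y HY Hi0Y] := part_cover i0 Heta.
have : ~~ (X \subset Y) by move/existsPn: Hno => /(_ Y); rewrite HY.
case/subsetPn => j HjX HjY.
pose e := mix X o1 z0.
pose m := mix Y e z0.
pose m' := mix Y z0 e.
have wz X' : wl (res X' z0) by rewrite /wl eqxx.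
have nz1 : rhoX xi z0 z0 != 0.
  by apply/negP => /prodf_eq0 [X' _]; apply/negP; apply: fx_ne0.
have nz2 : rhoX xi e e != 0.
  apply/negP => /prodf_eq0 [X' HX']; apply/negP; case: (eqVneq X' X) => [->|XX].
    have -> : res X e = res X o1 by apply: res_agree => i Hi; rewrite /e mixE Hi.
    by apply: fx_ne0; rewrite /wl eqxx orbT.
  have -> : res X' e = res X' z0.
    apply: res_agree => i Hi; rewrite /e mixE; case: ifP => // HiX.
    by case: (part_disj Hxi HX' HX XX Hi HiX).
  exact: fx_ne0.
have zm : rhoX xi m m = 0.
  apply/eqP/prodf_eq0; exists X => //; rewrite fx_zero //.
  rewrite /wl negb_or; apply/andP; split; apply/eqP.
    move=> /ffunP /(_ (exist _ i0 Hi0)); rewrite !ffunE /= Hi0Y Hi0.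
    by move=> /(congr1 val).
  move=> /ffunP /(_ (exist _ j HjX)); rewrite !ffunE /= (negbTE HjY).
  by move=> /(congr1 val).
have swap : rhoX xi z0 z0 * rhoX xi e e = rhoX xi m m * rhoX xi m' m'.
  rewrite !Hg -!big_split /=; apply: eq_bigr => Y' HY'.
  case: (eqVneq Y' Y) => [->|YY].
    have -> : res Y m = res Y e by apply: res_agree => i Hi; rewrite /m mixE Hi.
    have -> : res Y m' = res Y z0 by apply: res_agree => i Hi; rewrite /m' mixE Hi.
    exact: mulrC.
  have -> : res Y' m = res Y' z0.
    apply: res_agree => i Hi; rewrite /m mixE; case: ifP => // HiY.
    by case: (part_disj Heta HY' HY YY Hi HiY).
  have -> // : res Y' m' = res Y' e.
  apply: res_agree => i Hi; rewrite /m' mixE; case: ifP => // HiY.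
  by case: (part_disj Heta HY' HY YY Hi HiY).
by move: (mulf_neq0 nz1 nz2); rewrite swap zm mul0r eqxx.
Qed.
End Dev.

Section Main.
Variable C : numClosedFieldType.
Variables (n : nat) (d : 'I_n -> nat).
Hypothesis hd : forall i, (1 < d i)%N.
Variable Q : {set {set {set {set 'I_n}}}}.
Hypothesis hQ : is_PIIstar Q.
Implicit Types (Xi Ups : {set {set {set {set 'I_n}}}}) (S : {set {set {set 'I_n}}}) (xi eta : {set {set 'I_n}}).

Definition minP (rho : cfgL d -> cfgL d -> C) xi :=
  [/\ is_partition xi, unc xi rho &
    forall eta, is_partition eta -> unc eta rho -> refines xi eta].

Lemma downQ S : S \in Q -> is_downset S.
Proof. by move=> HS; case/andP: hQ => _ /forallP /(_ S); rewrite HS. Qed.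

Lemma down_part S x : S \in Q -> x \in S -> is_partition x.
Proof.
by move=> /downQ /and3P[/forallP H _ _] Hx; move: (H x); rewrite Hx.
Qed.

Lemma key rho xi S : minP rho xi -> S \in Q -> (uncS S rho <-> xi \in S).
Proof.
move=> [Hp Hu Hm] HS; split; last by move=> Hx; exists xi.
case=> eta He Hue.
have Hpe := down_part HS He.
move: (downQ HS) => /and3P[_ _ /forallP /(_ eta)]; rewrite He /= => /forallP /(_ xi).
by rewrite Hp (Hm eta Hpe Hue) => /implyP; apply.
Qed.

Lemma cunc_iff Xi rho xi : Xi \subset Q -> minP rho xi ->
  (Cunc Q Xi rho <-> [/\ is_density rho, xi \in wedgeF Xi & xi \notin veeCompl Q Xi]).
Proof.
move=> XQ Hm.
have XQ' S : S \in Xi -> S \in Q by move=> HS; apply: (subsetP XQ).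
have DQ S : S \in Q :\: Xi -> S \in Q by rewrite inE => /andP[].
split.
- case=> Hd [Hn Hy]; split => //.
    by apply/bigcapP => S HS; apply/(key Hm (XQ' S HS)); apply: Hy.
  apply/bigcupP => -[S HS Hx]; apply: (Hn S HS).
  by apply/(key Hm (DQ S HS)).
- case=> Hd HA HB; split => //; split.
    move=> S HS HuS; move/negP: HB; apply; apply/bigcupP; exists S => //.
    by apply/(key Hm (DQ S HS)).
  move=> S HS; apply/(key Hm (XQ' S HS)).
  by move/bigcapP: HA; apply.
Qed.

Lemma filt_sub Xi : is_filter Q Xi -> Xi \subset Q.
Proof. by case/and3P. Qed.

Lemma half1 Xi Ups : is_filter Q Xi -> is_filter Q Ups ->
  (forall rho : cfgL d -> cfgL d -> C, Cunc Q Xi rho -> Cunc Q Ups rho) ->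
  (wedgeF Xi :&: veeCompl Q Ups)%SET \subset veeCompl Q Xi /\
  wedgeF Xi \subset (veeCompl Q Xi :|: wedgeF Ups)%SET.
Proof.
move=> hXi hUps H.
have XQ := filt_sub hXi; have UQ := filt_sub hUps.
split.
- apply/subsetP => xi; rewrite inE => /andP[HA HB'].
  case: (boolP (xi \in veeCompl Q Xi)) => // HB.
  have Hp : is_partition xi.
    move/bigcupP: HB' => [S HS Hx]; apply: (down_part _ Hx).
    by move: HS; rewrite inE => /andP[].
  have Hm : minP (@rhoX C n d hd xi) xi.
    split; [exact: Hp | exact: rhoX_unc | move=> eta He Hu; exact: (rhoX_min Hp He Hu)].
  have := H _ ((cunc_iff XQ Hm).2 (And3 (@rhoX_density C n d hd xi Hp) HA HB)).
  by move/(cunc_iff UQ Hm) => -[_ _]; rewrite HB'.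
- apply/subsetP => xi HA; rewrite inE.
  case: (boolP (xi \in veeCompl Q Xi)) => //= HB.
  have Hp : is_partition xi.
    case/and3P: hXi => _ /set0Pn [S HS] _.
    apply: (down_part (S := S)); first by move/subsetP: XQ; apply.
    by move/bigcapP: HA; apply.
  have Hm : minP (@rhoX C n d hd xi) xi.
    split; [exact: Hp | exact: rhoX_unc | move=> eta He Hu; exact: (rhoX_min Hp He Hu)].
  have := H _ ((cunc_iff XQ Hm).2 (And3 (@rhoX_density C n d hd xi Hp) HA HB)).
  by move/(cunc_iff UQ Hm) => -[].
Qed.

Lemma half2 Xi Ups : is_filter Q Xi -> is_filter Q Ups ->
  (wedgeF Xi :&: veeCompl Q Ups)%SET \subset veeCompl Q Xi ->
  wedgeF Xi \subset (veeCompl Q Xi :|: wedgeF Ups)%SET ->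
  forall rho : cfgL d -> cfgL d -> C, Cunc Q Xi rho -> Cunc Q Ups rho.
Proof.
move=> hXi hUps H1 H2 rho Hc.
have XQ := filt_sub hXi; have UQ := filt_sub hUps.
have Hd : is_density rho by case: Hc.
have [xi [Hp Hu Hmin]] := min_exists hd Hd.
have Hm : minP rho xi by split.
move/(cunc_iff XQ Hm): Hc => [_ HA HB].
apply/(cunc_iff UQ Hm); split => //.
  by move/subsetP: H2 => /(_ xi HA); rewrite inE (negbTE HB).
apply/negP => HB'; move/subsetP: H1 => /(_ xi); rewrite inE HA HB' => /(_ isT).
by rewrite (negbTE HB).
Qed.
End Main.

Theorem proposition2 (C : numClosedFieldType) (n : nat) (d : 'I_n -> nat)
  (hn : (1 <= n)%N) (hd : forall i, (1 < d i)%N)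
  (Q : {set {set {set {set 'I_n}}}}) (hQ : is_PIIstar Q)
  (Xi Ups : {set {set {set {set 'I_n}}}})
  (hXi : is_filter Q Xi) (hUps : is_filter Q Ups) :
  (forall rho : cfgL d -> cfgL d -> C, Cunc Q Xi rho <-> Cunc Q Ups rho) <->
  [/\ (wedgeF Xi :&: veeCompl Q Ups)%SET \subset veeCompl Q Xi,
      wedgeF Xi \subset (veeCompl Q Xi :|: wedgeF Ups)%SET,
      (wedgeF Ups :&: veeCompl Q Xi)%SET \subset veeCompl Q Ups &
      wedgeF Ups \subset (veeCompl Q Ups :|: wedgeF Xi)%SET].
Proof.
split.
- move=> H.
  have [h1 h2] := half1 hd hQ hXi hUps (fun rho => (H rho).1).
  have [h3 h4] := half1 hd hQ hUps hXi (fun rho => (H rho).2).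
  by split.
- case=> h1 h2 h3 h4 rho; split.
    exact: (@half2 C n d hd Q hQ Xi Ups hXi hUps h1 h2 rho).
  exact: (@half2 C n d hd Q hQ Ups Xi hUps hXi h3 h4 rho).
Qed.
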